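(* Let $\Sigma=(I,X,\mathcal U,\phi,Y,h)$ be a forward complete control system with outputs. Then the following are equivalent: (1) $\Sigma$ is OUAG and BORS; (2) $\Sigma$ is OGUAG and OUGB; (3) $\Sigma$ is OCAG. Moreover, any of these properties implies that $\Sigma$ is IOpS.
   Context: Let $I\in\{\mathbb N_0,\mathbb R_0^+\}$. A forward complete control system with outputs $\Sigma=(I,X,\mathcal U,\phi,Y,h)$ consists of: a normed space $(X,\|\cdot\|_X)$; a vector space $U$ and a normed linear subspace $(\mathcal U,\|\cdot\|_{\mathcal U})$ of $\{u:I\to U\}$ such that for all $u\in\mathcal U$ and $\tau\in I$, $u(\cdot+\tau)\in\mathcal U$ with $\|u(\cdot+\tau)\|_{\mathcal U}\le\|u\|_{\mathcal U}$, and for all $t_2\ge t_1\ge 0$ the function $u|_{[t_1,t_2]}$ (equal to $u$ on $[t_1,t_2]$, $0$ elsewhere) lies in $\mathcal U$ with $\|u|_{[t_1,t_2]}\|_{\mathcal U}\le\|u\|_{\mathcal U}$; a map $\phi:I\times X\times\mathcal U\to X$ with $\phi(0,x,u)=x$, causality (if $u,\tilde u$ agree on $[0,t]$ then $\phi(t,x,u)=\phi(t,x,\tilde u)$), and cocycle property $\phi(t+s,x,u)=\phi(s,\phi(t,x,u),u(t+\cdot))$; a normed space $Y$ and $h:X\times U\to Y$. Write $y(t,x,u)=h(\phi(t,x,u),u(t))$, $B_r=\{x:\|x\|_X<r\}$, $B_{r,\mathcal U}=\{u:\|u\|_{\mathcal U}<r\}$. $\mathcal K,\mathcal K_\infty,\mathcal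 L,\mathcal{KL}$ are the standard comparison function classes ($\mathcal K$: continuous, strictly increasing, zero at zero; $\mathcal K_\infty$: unbounded $\mathcal K$; $\mathcal{KL}$: $\mathcal K$ in first argument, continuous decreasing to $0$ in the second). OUAG: $\exists\gamma\in\mathcal K_\infty$ such that for all $\varepsilon,r,s>0$ there is $\tau\in I$ with $\|y(t,x,u)\|_Y\le\varepsilon+\gamma(\|u\|_{\mathcal U})$ for all $x\in B_r,u\in B_{s,\mathcal U},t\ge\tau$. OGUAG: $\exists\gamma\in\mathcal K_\infty$ such that for all $\varepsilon,r>0$ there is $\tau\in I$ with $\|y(t,x,u)\|_Y\le\varepsilon+\gamma(\|u\|_{\mathcal U})$ for all $x\in B_r,u\in\mathcal U,t\ge\tau$. BORS: for all $C>0,\tau\in I$: $\sup\{\|y(t,x,u)\|_Y:\|x\|_X<C,\|u\|_{\mathcal U}<C,t<\tau\}<\infty$. OUGB: $\exists\sigma,\gamma\in\mathcal K_\infty,c>0$ with $\|y(t,x,u)\|_Y\le\sigma(\|x\|_X)+\gamma(\|u\|_{\mathcal U})+c$ for all $x,u,t$. OCAG: $\exists\beta\in\mathcal{KL},\gamma\in\mathcal K_\infty,c\ge0$ with $\|y(t,x,u)\|_Y\le\beta(\|x\|_X+c,t)+\gamma(\|u\|_{\mathcal U})$ for all $x,u,t$. IOpS: $\exists\beta\in\mathcal{KL},\gamma\in\mathcal K_\infty,c\ge0$ with $\|y(t,x,u)\|_Y\le\beta(\|x\|_X,t)+\gamma(\|u\|_{\mathcal U})+c$ for all $x,u,t$.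 *)

(* Defs.v *)
From HB Require Import structures.
From mathcomp Require Import all_boot all_order all_algebra.
From mathcomp Require Import all_classical all_reals all_analysis.
Set Implicit Arguments. Unset Strict Implicit. Unset Printing Implicit Defensive.
Import Order.TTheory GRing.Theory Num.Theory.
Import numFieldNormedType.Exports.
Local Open Scope classical_set_scope.
Local Open Scope ring_scope.

Section Defs.
Variable R : realType.

(* Time set I: disc = true  ->  I = N_0 (embedded in R as {0,1,2,...});
               disc = false ->  I = R_0^+ . *)
Definition time_pred (disc : bool) (x : R) : Prop :=
  if disc then exists n : nat, x = n%:R else 0 <= x.

Definition time (disc : bool) := {x : R | time_pred disc x}.

Lemma time_pred0 disc : time_pred disc 0.
Proof. by case: disc => /=; [exists 0%N|]. Qed.

Lemma time_predD disc a b :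
  time_pred disc a -> time_pred disc b -> time_pred disc (a + b).
Proof.
case: disc => /=; last exact: addr_ge0.
by move=> [n ->] [m ->]; exists (n + m)%N; rewrite natrD.
Qed.

Definition t0 disc : time disc := exist _ 0 (time_pred0 disc).
Definition tadd disc (t s : time disc) : time disc :=
  exist _ (sval t + sval s) (time_predD (proj2_sig t) (proj2_sig s)).

Variables (disc : bool) (X : normedModType R) (U : lmodType R) (Y : normedModType R).

Definition shift (u : time disc -> U) (tau : time disc) : time disc -> U :=
  fun s => u (tadd tau s).
Definition restr (u : time disc -> U) (t1 t2 : time disc) : time disc -> U :=
  fun s => if (sval t1 <= sval s) && (sval s <= sval t2) then u s else 0.

Definition input_space (Uset : set (time disc -> U))
    (nu : (time disc -> U) -> R) : Prop :=
  [/\ Uset (fun _ => 0),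
      (forall u v, Uset u -> Uset v -> Uset (fun t => u t + v t)) &
      (forall (a : R) u, Uset u -> Uset (fun t => a *: u t))] /\
  [/\ (forall u, Uset u -> 0 <= nu u /\ (nu u = 0 <-> u = fun _ => 0)),
      (forall (a : R) u, Uset u -> nu (fun t => a *: u t) = `|a| * nu u) &
      (forall u v, Uset u -> Uset v -> nu (fun t => u t + v t) <= nu u + nu v)] /\
  (forall u tau, Uset u -> Uset (shift u tau) /\ nu (shift u tau) <= nu u) /\
      (forall u t1 t2, Uset u -> sval t1 <= sval t2 ->
          Uset (restr u t1 t2) /\ nu (restr u t1 t2) <= nu u).

(* forward complete control system (phi is total on I x X x Uset) *)
Definition control_system (Uset : set (time disc -> U))
    (nu : (time disc -> U) -> R) (phi : time disc -> X -> (time disc -> U) -> X) : Prop :=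
  [/\ input_space Uset nu,
      (forall x u, Uset u -> phi (t0 disc) x u = x),
      (forall t x u v, Uset u -> Uset v ->
          (forall s : time disc, sval s <= sval t -> u s = v s) ->
          phi t x u = phi t x v) &
      (forall t s x u, Uset u ->
          phi (tadd t s) x u = phi s (phi t x u) (shift u t))].

Definition yout (phi : time disc -> X -> (time disc -> U) -> X) (h : X -> U -> Y)
  (t : time disc) (x : X) (u : time disc -> U) : Y := h (phi t x u) (u t).

End Defs.

Section Comparison.
Variable R : realType.

Definition classK (g : R -> R) : Prop :=
  [/\ {within [set x : R | 0 <= x], continuous g}, g 0 = 0 &
      (forall a b, 0 <= a -> a < b -> g a < g b)].

Definition classKinf (g : R -> R) : Prop :=
  classK g /\ (forall M : R, exists a, 0 <= a /\ M <= g a).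

Definition classKL (b : R -> R -> R) : Prop :=
  (forall t, 0 <= t -> classK (fun r => b r t)) /\
  (forall r, 0 <= r ->
     [/\ {within [set t : R | 0 <= t], continuous (b r)},
         (forall s t, 0 <= s -> s <= t -> b r t <= b r s) &
         b r t @[t --> +oo] --> 0]).
End Comparison.

Section Props.
Variables (R : realType) (disc : bool) (X : normedModType R) (U : lmodType R)
  (Y : normedModType R) (Uset : set (time R disc -> U))
  (nu : (time R disc -> U) -> R) (phi : time R disc -> X -> (time R disc -> U) -> X)
  (h : X -> U -> Y).

Let y := yout phi h.

Definition OUAG : Prop :=
  exists gamma : R -> R, classKinf gamma /\
  forall eps r s : R, 0 < eps -> 0 < r -> 0 < s ->
  exists tau : time R disc, forall x u t,
    `|x| < r -> Uset u -> nu u < s -> sval tau <= sval t ->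
    `|y t x u| <= eps + gamma (nu u).

Definition OGUAG : Prop :=
  exists gamma : R -> R, classKinf gamma /\
  forall eps r : R, 0 < eps -> 0 < r ->
  exists tau : time R disc, forall x u t,
    `|x| < r -> Uset u -> sval tau <= sval t ->
    `|y t x u| <= eps + gamma (nu u).

Definition BORS : Prop :=
  forall (C : R) (tau : time R disc), 0 < C ->
  exists M : R, forall x u t,
    `|x| < C -> Uset u -> nu u < C -> sval t < sval tau -> `|y t x u| <= M.

Definition OUGB : Prop :=
  exists (sigma gamma : R -> R) (c : R), classKinf sigma /\ classKinf gamma /\ 0 < c /\
  forall x u t, Uset u -> `|y t x u| <= sigma `|x| + gamma (nu u) + c.

Definition OCAG : Prop :=
  exists (beta : R -> R -> R) (gamma : R -> R) (c : R),
  classKL beta /\ classKinf gamma /\ 0 <= c /\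
  forall x u t, Uset u -> `|y t x u| <= beta (`|x| + c) (sval t) + gamma (nu u).

Definition IOpS : Prop :=
  exists (beta : R -> R -> R) (gamma : R -> R) (c : R),
  classKL beta /\ classKinf gamma /\ 0 <= c /\
  forall x u t, Uset u -> `|y t x u| <= beta `|x| (sval t) + gamma (nu u) + c.
End Props.

(* Main.v *)
Set Warnings "-all".
Require Import Defs.
From HB Require Import structures.
From mathcomp Require Import all_boot all_order all_algebra.
From mathcomp Require Import all_classical all_reals all_analysis.
From mathcomp Require Import ring lra.
Import Order.TTheory GRing.Theory Num.Theory.
Import numFieldNormedType.Exports.
Local Open Scope classical_set_scope.
Local Open Scope ring_scope.
Section Interp.
Variable R : realType.
Implicit Types (s t : R).

Definition clmp s : R := (`|s| - `|s - 1| + 1) / 2.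

Lemma clmp0 s : s <= 0 -> clmp s = 0.
Proof.
move=> hs; rewrite /clmp ler0_norm // ler0_norm; last by rewrite subr_le0 (le_trans hs).
lra.
Qed.

Lemma clmp1 s : 1 <= s -> clmp s = 1.
Proof.
move=> hs; rewrite /clmp ger0_norm ?(le_trans _ hs) // ger0_norm ?subr_ge0 //.
lra.
Qed.

Lemma clmpid s : 0 <= s -> s <= 1 -> clmp s = s.
Proof.
move=> h0 h1; rewrite /clmp ger0_norm // ler0_norm ?subr_le0 //.
lra.
Qed.

Lemma clmp_ge0 s : 0 <= clmp s.
Proof.
case: (lerP s 0) => h; first by rewrite clmp0.
case: (lerP 1 s) => h1; first by rewrite clmp1.
by rewrite clmpid ?ltW.
Qed.

Lemma clmp_le1 s : clmp s <= 1.
Proof.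
case: (lerP s 0) => h; first by rewrite clmp0.
case: (lerP 1 s) => h1; first by rewrite clmp1.
by rewrite clmpid ?ltW.
Qed.

Lemma clmp_le s t : s <= t -> clmp s <= clmp t.
Proof.
move=> st.
case: (lerP s 0) => h; first by rewrite (@clmp0 s h) clmp_ge0.
case: (lerP 1 t) => h1; first by rewrite (@clmp1 t h1) clmp_le1.
rewrite (@clmpid s); [|lra|lra]. rewrite (@clmpid t); lra.
Qed.

Lemma clmp_cont : continuous clmp.
Proof.
move=> x; rewrite /clmp.
apply: cvgMl; apply: cvgD; last exact: cvg_cst.
apply: cvgB; first exact: norm_continuous.
apply: (@cvg_comp _ _ _ (fun s => s - 1) Num.norm); last exact: norm_continuous.
apply: cvgB; [exact: cvg_id | exact: cvg_cst].
Qed.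

Implicit Types (p : nat -> R).

Definition Lsum p (N : nat) t : R :=
  \sum_(0 <= k < N) (p k.+1 - p k) * clmp (t - k%:R).
Definition interp p t := p 0%N + Lsum p (Num.trunc t).+1 t.

Lemma Lsum_tail p N M t : (N <= M)%N -> t <= N%:R -> Lsum p M t = Lsum p N t.
Proof.
move=> NM tN; rewrite /Lsum (big_cat_nat (leq0n N) NM) /=.
rewrite [X in _ + X]big1_seq ?addr0 // => k /andP[_].
rewrite mem_index_iota => /andP[Nk _].
rewrite clmp0 ?mulr0 //. rewrite subr_le0 (le_trans tN) // ler_nat //.
Qed.

Lemma interpE p N t : t <= N%:R -> interp p t = p 0%N + Lsum p N t.
Proof.
move=> tN; rewrite /interp; congr (_ + _).
have h1 : t <= (Num.trunc t).+1%:R.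
  case: (lerP 0 t) => t0; first exact/ltW/truncnS_gt.
  by rewrite (le_trans (ltW t0)).
case: (leqP N (Num.trunc t).+1) => hN.
  exact: Lsum_tail.
by rewrite (@Lsum_tail p _ _ t (ltnW hN) h1).
Qed.

Lemma clmp_shift_cont (a : R) : continuous (fun s => clmp (s - a)).
Proof.
move=> x; apply: (@cvg_comp _ _ _ (fun s => s - a) clmp (nbhs x) (nbhs (x - a))).
  apply: cvgB; [exact: cvg_id | exact: cvg_cst].
exact: clmp_cont.
Qed.

Lemma Lsum_cont p N : continuous (Lsum p N).
Proof.
elim: N => [|N IH].
  rewrite /Lsum => x; under eq_fun do rewrite big_geq //; exact: cvg_cst.
have -> : Lsum p N.+1 = fun t => Lsum p N t + (p N.+1 - p N) * clmp (t - N%:R).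
  by apply: funext => t; rewrite /Lsum big_nat_recr.
move=> x; apply: cvgD; first exact: IH.
apply: cvgMr; exact: clmp_shift_cont.
Qed.

Lemma interp_cont p : continuous (interp p).
Proof.
move=> x.
set N := (Num.trunc x).+2.
have hx : x + 1 <= N%:R.
  case: (lerP 0 x) => x0.
    by rewrite /N -addn1 natrD lerD2r ltW // truncnS_gt.
  rewrite /N -addn1 natrD lerD2r (le_trans (ltW x0)) //.
have E : {near x, (fun t => p 0%N + Lsum p N t) =1 interp p}.
  have : \forall t \near x, `|x - t| < 1.
    exact: (@cvgr_dist_lt _ _ _ (nbhs x) _ id x (@cvg_id _ (nbhs x)) 1 ltr01).
  apply: filterS => t ht.
  have : t - x <= `|x - t| by rewrite distrC ler_norm.
  move=> h; rewrite (@interpE p N t) //; lra.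
apply: cvg_trans (near_eq_cvg E) _.
rewrite (@interpE p N x); last lra.
apply: cvgD; [exact: cvg_cst | exact: Lsum_cont].
Qed.


Lemma interp_seg p (k : nat) t : k%:R <= t -> t <= k.+1%:R ->
  interp p t = p k + (p k.+1 - p k) * (t - k%:R).
Proof.
move=> h1 h2; rewrite (@interpE p k.+1 t) // /Lsum big_nat_recr //=.
rewrite (@clmpid (t - k%:R)); last 2 first.
- by rewrite subr_ge0.
- by move: h2; rewrite -natr1; lra.
have -> : \sum_(0 <= i < k) (p i.+1 - p i) * clmp (t - i%:R) =
          \sum_(0 <= i < k) (p i.+1 - p i).
  apply: eq_big_nat => i /andP[_ hi]; rewrite clmp1 ?mulr1 //.
  have : (i.+1%:R <= k%:R :> R) by rewrite ler_nat.
  rewrite -natr1; lra.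
by rewrite telescope_sumr //; ring.
Qed.

Lemma interp_nat p (k : nat) : interp p k%:R = p k.
Proof. by rewrite (@interp_seg p k) ?subrr ?mulr0 ?addr0 // ler_nat. Qed.

Lemma interp_up p s t : (forall k, p k <= p k.+1) -> s <= t -> interp p s <= interp p t.
Proof.
move=> hp st; set N := (Num.trunc `|t|).+1.
have tN : t <= N%:R by rewrite (le_trans (ler_norm t)) // ltW // truncnS_gt.
rewrite (@interpE p N s) ?(le_trans st) // (@interpE p N t) // lerD2l.
apply: ler_sum_nat => i _; apply: ler_wpM2l; first by rewrite subr_ge0.
by apply: clmp_le; rewrite lerD2r.
Qed.

Lemma interp_down p s t : (forall k, p k.+1 <= p k) -> s <= t -> interp p t <= interp p s.
Proof.
move=> hp st; set N := (Num.trunc `|t|).+1.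
have tN : t <= N%:R by rewrite (le_trans (ler_norm t)) // ltW // truncnS_gt.
rewrite (@interpE p N s) ?(le_trans st) // (@interpE p N t) // lerD2l.
apply: ler_sum_nat => i _; apply: ler_wnM2l; first by rewrite subr_le0.
by apply: clmp_le; rewrite lerD2r.
Qed.

Lemma interp_strict p s t : (forall k, p k < p k.+1) -> 0 <= s -> s < t ->
  interp p s < interp p t.
Proof.
move=> hp s0 st; set k := Num.trunc s.
have /andP[hk1 hk2] := truncn_itv s0.
have ds : 0 < p k.+1 - p k by rewrite subr_gt0.
rewrite (@interp_seg p k s) //; last exact: ltW.
case: (lerP t k.+1%:R) => ht.
  rewrite (@interp_seg p k t) //; last by rewrite (le_trans hk1) // ltW.
  by rewrite ltrD2l ltr_pM2l // ltrD2r.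
apply: (@lt_le_trans _ _ (p k.+1)).
  have : (p k.+1 - p k) * (s - k%:R) < (p k.+1 - p k) * 1.
    rewrite ltr_pM2l //; move: hk2; rewrite -natr1; lra.
  by rewrite mulr1 -ltrBrDl.
rewrite -interp_nat; apply: interp_up; first by move=> j; apply: ltW.
exact: ltW.
Qed.

Lemma interp_ge0 p t : p 0%N = 0 -> (forall k, p k <= p k.+1) -> 0 <= t -> 0 <= interp p t.
Proof. by move=> p0 hp t0; rewrite -p0 -(interp_nat p 0) interp_up. Qed.

End Interp.
Arguments interp {R} p t.
Arguments Lsum {R} p N t.
Arguments clmp {R} s.
Arguments interp_nat {R} p k.

Section Comp.
Variable R : realType.

Lemma classK_le (g : R -> R) a b : classK g -> 0 <= a -> a <= b -> g a <= g b.
Proof.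
move=> [_ _ hs] a0; rewrite le_eqVlt => /orP[/eqP -> //|ab].
exact/ltW/hs.
Qed.

Lemma classK_ge0 (g : R -> R) a : classK g -> 0 <= a -> 0 <= g a.
Proof.
move=> hg a0; have [_ g0 _] := hg; rewrite -g0; exact: classK_le.
Qed.

Lemma classKinf_add (f g : R -> R) : classKinf f -> classKinf g ->
  classKinf (fun x => f x + g x).
Proof.
move=> [[cf f0 sf] uf] [[cg g0 sg] ug]; split; first split.
- move=> x; apply: cvgD; [exact: cf | exact: cg].
- by rewrite f0 g0 addr0.
- by move=> a b a0 ab; apply: ltrD; [exact: sf | exact: sg].
move=> M; have [a [a0 ha]] := uf M; exists a; split => //.
rewrite -[M]addr0 lerD //; exact: (@classK_ge0 g a (And3 cg g0 sg)).
Qed.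

Lemma classKinf_id : classKinf (fun x : R => x).
Proof.
split; first split => //.
- by apply: continuous_subspaceT => x; exact: cvg_id.
move=> M; exists `|M|; split => //; exact: ler_norm.
Qed.

Fixpoint kseq (A : nat -> R) (k : nat) : R :=
  if k is k'.+1 then kseq A k' + `|A k| + 1 else 0.

Lemma kseq_up A k : kseq A k < kseq A k.+1.
Proof. by rewrite /= -addrA ltrDl ltr_wpDl. Qed.

Lemma kseq_ge A k : k%:R <= kseq A k.
Proof.
elim: k => [//|k IH] /=; rewrite -natr1 lerD // ler_wpDr //.
Qed.

Lemma kseq_ge0 A k : 0 <= kseq A k.
Proof. exact: (le_trans _ (kseq_ge A k)). Qed.

Lemma kseq_A A k : (0 < k)%N -> A k <= kseq A k.
Proof.
case: k => [//|k] _ /=; rewrite -addrA ler_wpDl ?kseq_ge0 //.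
by rewrite ler_wpDr // ler_norm.
Qed.

Lemma interp0 (p : nat -> R) : interp p 0 = p 0%N.
Proof. exact: (@interp_nat R p 0). Qed.

Lemma interp_classKinf (p : nat -> R) : p 0%N = 0 -> (forall k, p k < p k.+1) ->
  (forall k, k%:R <= p k) -> classKinf (interp p).
Proof.
move=> p0 hp hk; split; first split.
- exact/continuous_subspaceT/interp_cont.
- by rewrite interp0.
- by move=> a b a0 ab; apply: interp_strict.
move=> M; exists (Num.trunc `|M|).+1%:R; split => //.
rewrite interp_nat (le_trans _ (hk _)) // (le_trans (ler_norm M)) // ltW //.
exact: truncnS_gt.
Qed.

Lemma Kdom (A : nat -> R) : exists sg : R -> R, classKinf sg /\ continuous sg /\
  forall (n : nat) (m : R), n%:R <= m -> A n <= sg m + `|A 0%N|.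
Proof.
exists (interp (kseq A)).
have hup : forall k, kseq A k <= kseq A k.+1 by move=> k; exact/ltW/kseq_up.
split; first by apply: interp_classKinf => //; [exact: kseq_up | exact: kseq_ge].
split; first exact: interp_cont.
move=> n m nm; have m0 : 0 <= m by rewrite (le_trans _ nm).
case: n nm => [|n] nm.
  by rewrite ler_wpDl ?ler_norm // interp_ge0.
rewrite ler_wpDr // (le_trans (@kseq_A A n.+1 (ltn0Sn n))) //.
by rewrite -interp_nat interp_up.
Qed.

End Comp.

Section Prod.
Variable R : realType.
Lemma product_KL (ka l : R -> R) (a : R) : 0 < a -> continuous ka -> classK ka ->
  continuous l -> (forall t, 0 <= t -> 0 < l t) ->
  (forall s t, 0 <= s -> s <= t -> l t <= l s) -> l t @[t --> +oo] --> 0 ->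
  classKL (fun r t => ka (a * r) * l t).
Proof.
move=> a0 cka hk cl lpos lmono llim; have [_ ka0 kas] := hk; split.
  move=> t t0; split.
  - apply: continuous_subspaceT => x; apply: cvgMl.
    apply: (@cvg_comp _ _ _ (fun r => a * r) ka (nbhs x) (nbhs (a * x))); last exact: cka.
    apply: cvgM; [exact: cvg_cst | exact: cvg_id].
  - by rewrite mulr0 ka0 mul0r.
  - move=> r s r0 rs; rewrite ltr_pM2r ?lpos //; apply: kas.
      by rewrite mulr_ge0 // ltW.
    by rewrite ltr_pM2l.
move=> r r0; have kr : 0 <= ka (a * r).
  by apply: (@classK_ge0 R ka) => //; rewrite mulr_ge0 // ltW.
split.
- apply: continuous_subspaceT => x; apply: cvgM; [exact: cvg_cst | exact: cl].
- by move=> s t s0 st; rewrite ler_wpM2l // lmono.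
- rewrite -(mulr0 (ka (a * r))); apply: cvgM; [exact: cvg_cst | exact: llim].
Qed.


End Prod.

Section Main.
Variables (R : realType) (disc : bool) (X : normedModType R) (U : lmodType R)
  (Y : normedModType R) (Uset : set (time R disc -> U))
  (nu : (time R disc -> U) -> R) (phi : time R disc -> X -> (time R disc -> U) -> X)
  (h : X -> U -> Y).
Hypothesis nu0 : forall u, Uset u -> 0 <= nu u.

Local Notation y := (yout phi h).
Ltac unf := unfold OUGB, BORS, OGUAG, OUAG, OCAG, IOpS; cbv zeta.

Lemma time_ge0 (t : time R disc) : 0 <= sval t.
Proof.
case: t => x /=; rewrite /time_pred; case: disc => [[n ->]|//].
exact: ler0n.
Qed.

Lemma time_ge (T : R) : exists tau : time R disc, T <= sval tau.
Proof.
have hp : time_pred disc (if disc then (Num.trunc `|T|).+1%:R else `|T|).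
  by rewrite /time_pred; case: disc => //; exists (Num.trunc `|T|).+1.
exists (exist _ _ hp) => /=.
case: disc hp => _; last exact: ler_norm.
by rewrite (le_trans (ler_norm T)) // ltW // truncnS_gt.
Qed.

Lemma near_pinfty_ex (P : R -> Prop) : (\forall t \near +oo, P t) ->
  exists M : R, forall t, M < t -> P t.
Proof. by move=> [M [_ HM]]; exists M. Qed.

Lemma OUGB_BORS : OUGB Uset nu phi h -> BORS Uset nu phi h.
Proof.
unf.
move=> [sg [ga [c [hsg [hga [c0 Hb]]]]]] C tau C0.
exists (sg C + ga C + c) => x u t hx hu hnu _.
apply: (le_trans (Hb x u t hu)); rewrite lerD2r lerD //.
  by apply: classK_le; [exact: hsg.1| |exact: ltW].
by apply: classK_le; [exact: hga.1|exact: nu0|exact: ltW].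
Qed.

Lemma OGUAG_OUAG : OGUAG Uset nu phi h -> OUAG Uset nu phi h.
Proof.
unf.
move=> [ga [hga H]]; exists ga; split => // eps r s e0 r0 _.
have [tau Ht] := H eps r e0 r0; exists tau => x u t hx hu _ ht.
exact: Ht.
Qed.

Lemma max_ex (a b : R) : exists m, [/\ a <= m, b <= m & (m = a \/ m = b)].
Proof.
case: (lerP a b) => ab; first by exists b; split => //; right.
by exists a; split => //; [exact: ltW| left].
Qed.

Lemma OUAG_BORS_OUGB : OUAG Uset nu phi h -> BORS Uset nu phi h -> OUGB Uset nu phi h.
Proof.
unf.
move=> [ga [hga H]] HB.
have : forall n : nat, exists B, forall x u t, `|x| < n.+1%:R -> Uset u ->
    nu u < n.+1%:R -> `|y t x u| <= B.
  move=> n; have [tau Ht] := H 1 n.+1%:R n.+1%:R ltr01 (ltr0Sn _ _) (ltr0Sn _ _).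
  have [M HM] := HB n.+1%:R tau (ltr0Sn _ _).
  have g0 : 0 <= ga n.+1%:R by apply: classK_ge0; [exact: hga.1|exact: ler0n].
  exists (`|M| + 1 + ga n.+1%:R) => x u t hx hu hnu.
  case: (ltrP (sval t) (sval tau)) => ht.
    have := HM x u t hx hu hnu ht; have := ler_norm M; lra.
  have := Ht x u t hx hu hnu ht.
  have : ga (nu u) <= ga n.+1%:R by apply: classK_le; [exact: hga.1|exact: nu0|exact: ltW].
  have := normr_ge0 M; lra.
move/choice => [A HA].
have [sg [hsg [_ Hdom]]] := @Kdom R A.
exists sg, sg, (`|A 0%N| + 1); split => //; split => //; split.
  by have := normr_ge0 (A 0%N); lra.
move=> x u t hu.
have [m [hxm hum hm]] := max_ex `|x| (nu u).
have m0 : 0 <= m by rewrite (le_trans _ hxm).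
set n := Num.trunc m.
have hn : m < n.+1%:R by exact: truncnS_gt.
have := HA n x u t (le_lt_trans hxm hn) hu (le_lt_trans hum hn).
have := Hdom n m; rewrite truncn_le m0 => /(_ isT).
have s1 : 0 <= sg `|x| by apply: classK_ge0; [exact: hsg.1|].
have s2 : 0 <= sg (nu u) by apply: classK_ge0; [exact: hsg.1|exact: nu0].
have : sg m <= sg `|x| + sg (nu u).
  by case: hm => ->; lra.
lra.
Qed.

Lemma OUAG_OUGB_OGUAG : OUAG Uset nu phi h -> OUGB Uset nu phi h -> OGUAG Uset nu phi h.
Proof.
unf.
move=> [g1 [hg1 H]] [sg [g2 [c [hsg [hg2 [c0 Hb]]]]]].
exists (fun v => g1 v + g2 v + v); split.
  by apply: classKinf_add; [apply: classKinf_add|exact: classKinf_id].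
move=> eps r e0 r0.
have sr : 0 <= sg r by apply: classK_ge0; [exact: hsg.1|exact: ltW].
have [tau Ht] := H eps r (sg r + c + 1) e0 r0 ltac:(lra).
exists tau => x u t hx hu ht.
have n0 := @nu0 u hu.
have a1 : 0 <= g1 (nu u) by apply: classK_ge0; [exact: hg1.1|].
have a2 : 0 <= g2 (nu u) by apply: classK_ge0; [exact: hg2.1|].
case: (ltrP (nu u) (sg r + c + 1)) => hs.
  have := Ht x u t hx hu hs ht; lra.
have := Hb x u t hu.
have : sg `|x| <= sg r by apply: classK_le; [exact: hsg.1| |exact: ltW].
lra.
Qed.

Lemma OCAG_OGUAG : OCAG Uset nu phi h -> OGUAG Uset nu phi h.
Proof.
unf.
move=> [b [ga [c [[hb1 hb2] [hga [c0 Hb]]]]]].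
exists ga; split => // eps r e0 r0.
have [_ _ lim] := hb2 (r + c) ltac:(lra).
have [M HM] := @near_pinfty_ex _ ((iffLR (cvgrPdist_le _ _) lim) eps e0).
have [tau htau] := time_ge (`|M| + 1).
exists tau => x u t hx hu ht.
have t0 := time_ge0 t.
have hM : M < sval t by have := ler_norm M; lra.
have := HM _ hM; rewrite sub0r normrN => hle.
have : b (`|x| + c) (sval t) <= b (r + c) (sval t).
  apply: (@classK_le R (fun r => b r (sval t))); [exact: hb1| |].
    by have := normr_ge0 x; lra.
  lra.
have := ler_norm (b (r + c) (sval t)).
have := Hb x u t hu; lra.
Qed.

Lemma OCAG_OUGB : OCAG Uset nu phi h -> OUGB Uset nu phi h.
Proof.
unf.
move=> [b [ga [c [[hb1 hb2] [hga [c0 Hb]]]]]].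
pose A := fun n : nat => b (n%:R + 1 + c) 0.
have [sg [hsg [_ Hdom]]] := @Kdom R A.
exists sg, ga, (`|A 0%N| + 1); split => //; split => //; split.
  by have := normr_ge0 (A 0%N); lra.
move=> x u t hu.
have x0 := normr_ge0 x.
set n := Num.trunc `|x|.
have hn : `|x| < n.+1%:R by exact: truncnS_gt.
have := Hdom n `|x|; rewrite truncn_le x0 => /(_ isT).
have [_ mono _] := hb2 (`|x| + c) ltac:(lra).
have := mono 0 (sval t) (lexx _) (time_ge0 t).
have : b (`|x| + c) 0 <= A n.
  apply: (@classK_le R (fun r => b r 0)); [exact: hb1| lra |].
  by move: hn; rewrite -natr1; lra.
have := Hb x u t hu.
have := normr_ge0 (A 0%N).
lra.
Qed.

Lemma core : OGUAG Uset nu phi h -> OUGB Uset nu phi h ->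
  exists ka l ga : R -> R,
  [/\ continuous ka, classK ka, continuous l, (forall t, 0 <= t -> 0 < l t) &
      (forall s t, 0 <= s -> s <= t -> l t <= l s)] /\
  l t @[t --> +oo] --> 0 /\ classKinf ga /\
  forall x u t, Uset u -> `|y t x u| <= ka (`|x| + 1) * l (sval t) + ga (nu u).
Proof.
unf.
move=> [g1 [hg1 H]] [sg [g2 [c [hsg [hg2 [c0 Hb]]]]]].
pose ga := fun v => g1 v + g2 v.
have hga : classKinf ga by apply: classKinf_add.
pose B := fun v => sg v + c.
pose A := fun n : nat => n%:R * (B n%:R + 1).
have [ka [hka [cka Hdom]]] := @Kdom R A.
have A0 : `|A 0%N| = 0 by rewrite /A mul0r normr0.
have sgge : forall v, 0 <= v -> 0 <= sg v.
  by move=> v v0; apply: classK_ge0; [exact: hsg.1|].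
have sgle : forall v w, 0 <= v -> v <= w -> sg v <= sg w.
  by move=> v w v0 vw; apply: classK_le; [exact: hsg.1| |].
have Kb : forall x : X, 1 <= ka (`|x| + 1) /\ B `|x| + 1 <= ka (`|x| + 1) /\
    `|x| * (B `|x| + 1) <= ka (`|x| + 1).
  move=> x; have x0 := normr_ge0 x.
  set n := Num.trunc `|x|.
  have /andP[hn1 hn2] := truncn_itv x0.
  have hd := Hdom n.+1 (`|x| + 1); rewrite A0 addr0 in hd.
  have := hd ltac:(by rewrite -natr1 lerD2r).
  rewrite /A => hA.
  have hB : B `|x| <= B n.+1%:R by rewrite /B lerD2r sgle // ltW.
  have hB0 : 0 <= B `|x| by rewrite /B; have := sgge _ x0; lra.
  have n1 : 1 <= n.+1%:R :> R by rewrite ler1n.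
  have : n.+1%:R * (B `|x| + 1) <= n.+1%:R * (B n.+1%:R + 1).
    by rewrite ler_wpM2l // lerD2r.
  move: hn2; rewrite -/n => hn2.
  split; [nra|split; nra].
have Kpos : forall x : X, 0 < ka (`|x| + 1).
  by move=> x; have [k1 _] := Kb x; lra.
pose w := fun x u t => `|y t x u| - ga (nu u).
have wB : forall x u t, Uset u -> w x u t <= B `|x|.
  move=> x u t hu; rewrite /w /B /ga.
  have := Hb x u t hu.
  have : 0 <= g1 (nu u) by apply: classK_ge0; [exact: hg1.1|exact: nu0].
  lra.
pose rat := fun x u t => w x u t / ka (`|x| + 1).
have rat1 : forall x u t, Uset u -> rat x u t <= 1.
  move=> x u t hu; rewrite /rat ler_pdivrMr // mul1r.
  have [_ [k2 _]] := Kb x; have := wB x u t hu; lra.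
have rattail : forall eps, 0 < eps -> exists T : R, forall x u t, Uset u ->
    T <= sval t -> rat x u t <= eps.
  move=> eps e0.
  have [tau Ht] := H eps (eps^-1 + 1) e0 ltac:(have := invr_gt0 eps; rewrite e0; lra).
  exists (sval tau) => x u t hu ht; rewrite /rat ler_pdivrMr //.
  have [k1 [k2 k3]] := Kb x.
  case: (ltrP `|x| (eps^-1 + 1)) => hx.
    have := Ht x u t hx hu ht; rewrite /w /ga.
    have : 0 <= g2 (nu u) by apply: classK_ge0; [exact: hg2.1|exact: nu0].
    nra.
  have ex : 1 <= eps * `|x|.
    have : eps * eps^-1 = 1 by rewrite mulfV // gt_eqF.
    nra.
  have := wB x u t hu.
  have hB0 : 0 <= B `|x| by rewrite /B; have := sgge _ (normr_ge0 x); lra.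
  nra.
pose S := fun t0 : R => [set z : R | z = 0 \/ exists x u t, [/\ Uset u, t0 <= sval t & z = rat x u t]].
have Sub : forall t0, has_ubound (S t0).
  move=> t0; exists 1 => z [->|[x [u [t [hu _ ->]]]]]; [exact: ler01|exact: rat1].
have S0 : forall t0, S t0 0 by move=> t0; left.
pose D := fun t0 => sup (S t0).
have D0 : forall t0, 0 <= D t0 by move=> t0; exact: ub_le_sup (Sub t0) _ (S0 t0).
have Drat : forall x u t, Uset u -> rat x u t <= D (sval t).
  move=> x u t hu; apply: ub_le_sup (Sub _) _ _; by right; exists x, u, t; split.
have Dmono : forall t0 t1, t0 <= t1 -> D t1 <= D t0.
  move=> t0 t1 t01; apply: ge_sup; first by exists 0.
  move=> z [->|[xx [uu [tt [hu ht ->]]]]]; first exact: D0.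
  apply: ub_le_sup (Sub _) _ _; right; exists xx, uu, tt; split => //; exact: le_trans ht.
have Dtail : forall eps, 0 < eps -> exists T : R, forall t0, T <= t0 -> D t0 <= eps.
  move=> eps e0; have [T HT] := rattail eps e0; exists T => t0 Tt0.
  apply: ge_sup; first by exists 0.
  move=> z [->|[xx [uu [tt [hu ht ->]]]]]; first exact: ltW.
  by apply: HT => //; exact: le_trans ht.
pose q := fun k : nat => D (k%:R - 1) + (k%:R + 1)^-1.
have qpos : forall k, 0 < q k.
  move=> k; rewrite /q; have := D0 (k%:R - 1).
  have : 0 < (k%:R + 1)^-1 :> R by rewrite invr_gt0 ltr_wpDl.
  lra.
have qdown : forall k, q k.+1 <= q k.
  move=> k; rewrite /q; apply: lerD.
    by apply: Dmono; rewrite lerD2r ler_nat.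
  by rewrite lef_pV2 ?posrE ?ltr_wpDl // lerD2r ler_nat.
have qD : forall k : nat, D k%:R <= q k.+1.
  move=> k; rewrite /q -natr1 addrK ler_wpDr // invr_ge0 ler_wpDl //.
pose l := interp q.
have lge : forall t, 0 <= t -> q (Num.trunc t).+1 <= l t.
  move=> t t0; have /andP[k1 k2] := truncn_itv t0.
  rewrite /l (@interp_seg R q (Num.trunc t) t) //; last exact: ltW.
  have := qdown (Num.trunc t); move: k2; rewrite -natr1 => k2.
  nra.
have lpos : forall t, 0 <= t -> 0 < l t.
  by move=> t t0; apply: lt_le_trans (lge t t0); exact: qpos.
have lD : forall t, 0 <= t -> D t <= l t.
  move=> t t0; have /andP[k1 k2] := truncn_itv t0.
  apply: le_trans (lge t t0); apply: le_trans (qD _); exact: Dmono.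
exists ka, l, ga; split; last split; last split => //.
- split => //; first exact: hka.1; first exact: interp_cont.
  by move=> s t s0 st; apply: interp_down.
- apply/cvgrPdist_le => eps e0.
  have [T HT] := Dtail (eps / 2) ltac:(lra).
  set z := `|T| + 1 + 2 / eps.
  set K := (Num.trunc z).+1.
  have hK : z < K%:R by exact: truncnS_gt.
  exists K%:R; split; first exact: num_real.
  move=> t Kt; have t0 : 0 <= t by apply: le_trans (ltW Kt).
  rewrite sub0r normrN ger0_norm; last exact/ltW/lpos.
  have : l t <= l K%:R by apply: interp_down => //; exact: ltW.
  rewrite /l interp_nat /q.
  have : D (K%:R - 1) <= eps / 2.
    apply: HT; move: hK; rewrite /z; have := ler_norm T.
    have : 0 <= 2 / eps by rewrite divr_ge0 // ltW.
    lra.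
  have hinv : (K%:R + 1)^-1 * (K%:R + 1) = 1 :> R by rewrite mulVf // gt_eqF // ltr_wpDl.
  have hiv : 0 < (K%:R + 1)^-1 :> R by rewrite invr_gt0 ltr_wpDl.
  have he : 2 / eps * eps = 2 :> R by rewrite -mulrA mulVf ?mulr1 // gt_eqF.
  have : 2 / eps < K%:R + 1.
    move: hK; rewrite /z; have := normr_ge0 T; lra.
  move=> ha; have hi : (K%:R + 1)^-1 <= eps / 2.
    rewrite -[X in X <= _]mul1r ler_pdivrMr ?ltr_wpDl //.
    move: ha he; set a := 2 / eps; nra.
  lra.
- move=> x u t hu.
  have t0 : 0 <= sval t.
    case: t => v /=; rewrite /time_pred; case: disc => [[n ->]|//]; exact: ler0n.
  have := Drat x u t hu; rewrite /rat ler_pdivrMr // => hw.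
  have := lD _ t0; have := Kpos x; move: hw; rewrite /w.
  nra.
Qed.


Lemma core_OCAG : OGUAG Uset nu phi h -> OUGB Uset nu phi h -> OCAG Uset nu phi h.
Proof.
move=> H1 H2; have [ka [l [ga [[cka hka cl lpos lmono] [llim [hga Hb]]]]]] := core H1 H2.
unf; exists (fun r t => ka (1 * r) * l t), ga, 1; split.
  exact: (@product_KL R ka l 1).
split => //; split; first exact: ler01.
by move=> x u t hu; rewrite mul1r; exact: Hb.
Qed.

Lemma core_IOpS : OGUAG Uset nu phi h -> OUGB Uset nu phi h -> IOpS Uset nu phi h.
Proof.
move=> H1 H2; have [ka [l [ga [[cka hka cl lpos lmono] [llim [hga Hb]]]]]] := core H1 H2.
unf; exists (fun r t => ka (2 * r) * l t), ga, (ka 2 * l 0); split.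
  exact: (@product_KL R ka l 2).
have k2 : 0 <= ka 2 by apply: (@classK_ge0 R ka).
have l0 := lpos 0 (lexx _).
split => //; split; first by rewrite mulr_ge0 // ltW.
move=> x u t hu.
have t0 : 0 <= sval t by exact: time_ge0.
have x0 := normr_ge0 x.
have hk : ka (`|x| + 1) <= ka (2 * `|x|) + ka 2.
  have a0 : 0 <= ka (2 * `|x|) by apply: (@classK_ge0 R ka) => //; lra.
  case: (lerP `|x| 1) => hx.
    have : ka (`|x| + 1) <= ka 2 by apply: (@classK_le R ka) => //; lra.
    lra.
  have : ka (`|x| + 1) <= ka (2 * `|x|) by apply: (@classK_le R ka) => //; lra.
  lra.
have := Hb x u t hu.
have := lmono 0 (sval t) (lexx _) t0.
have := lpos _ t0.
have : 0 <= ka (`|x| + 1) by apply: (@classK_ge0 R ka) => //; lra.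
nra.
Qed.

Lemma all_equiv : [/\ (OUAG Uset nu phi h /\ BORS Uset nu phi h) <->
        (OGUAG Uset nu phi h /\ OUGB Uset nu phi h),
      (OGUAG Uset nu phi h /\ OUGB Uset nu phi h) <-> OCAG Uset nu phi h &
      (OCAG Uset nu phi h -> IOpS Uset nu phi h)].
Proof.
split.
- split.
    move=> [H1 H2]; have H3 := OUAG_BORS_OUGB H1 H2.
    by split => //; exact: OUAG_OUGB_OGUAG.
  move=> [H1 H2]; split; [exact: OGUAG_OUAG | exact: OUGB_BORS].
- split; first by move=> [H1 H2]; exact: core_OCAG.
  by move=> H; split; [exact: OCAG_OGUAG | exact: OCAG_OUGB].
- by move=> H; apply: core_IOpS; [exact: OCAG_OGUAG | exact: OCAG_OUGB].
Qed.

End Main.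

Theorem proposition1 (R : realType) (disc : bool) (X : normedModType R)
  (U : lmodType R) (Y : normedModType R) (Uset : set (time R disc -> U))
  (nu : (time R disc -> U) -> R)
  (phi : time R disc -> X -> (time R disc -> U) -> X) (h : X -> U -> Y) :
  control_system Uset nu phi ->
  [/\ (OUAG Uset nu phi h /\ BORS Uset nu phi h) <->
        (OGUAG Uset nu phi h /\ OUGB Uset nu phi h),
      (OGUAG Uset nu phi h /\ OUGB Uset nu phi h) <-> OCAG Uset nu phi h &
      (OCAG Uset nu phi h -> IOpS Uset nu phi h)].
Proof.
move=> [[_ [[hnu _ _] _]] _ _ _].
apply: (@all_equiv R disc X U Y Uset nu phi h).
by move=> u hu; have [] := hnu u hu.
Qed.
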